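(* Let $Y,X$ be locally compact Hausdorff spaces, $r\colon Y\to X$ continuous, and $\Lambda\colon C_c(Y)\to C_c(X)$ a positive linear map. Then $\Lambda(f)(x)=0$ for all $f\in C_c(Y)$ and $x\in X$ with $f|_{r^{-1}(x)}=0$ if and only if $\Lambda(f\cdot(g\circ r))=\Lambda(f)g$ for all $f\in C_c(Y)$ and $g\in C_c(X)$. *)

(* Defs.v *)
From HB Require Import structures.
From mathcomp Require Import all_boot all_order all_algebra.
From mathcomp.real_closed Require Export complex.
From mathcomp Require Import all_classical all_reals all_analysis.
Import Order.TTheory GRing.Theory Num.Theory.
Export ComplexField.
Export numFieldTopology.Exports numFieldNormedType.Exports.

Set Implicit Arguments.
Unset Strict Implicit.
Unset Printing Implicit Defensive.

Local Open Scope ring_scope.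
Local Open Scope classical_set_scope.

(* The usual (norm) topology on C = R[i], obtained from its
   numClosedFieldType structure exactly as MathComp-Analysis does for
   any numeric field. *)
HB.instance Definition _ (R : rcfType) := PseudoPointedMetric.copy R[i] R[i]^o.

Definition Cc (R : realType) (T : topologicalType) (f : T -> R[i]) : Prop :=
  continuous f /\ compact (closure [set t | f t != 0]).

(* Lam : C_c(Y) -> C_c(X) is a positive linear map.  Lam is given as a
   map on all functions Y -> C, but only its values on C_c(Y) matter. *)
Definition positive_linear_Cc (R : realType) (Y X : topologicalType)
    (Lam : (Y -> R[i]) -> (X -> R[i])) : Prop :=
  [/\ (forall f, Cc f -> Cc (Lam f)),
      (forall (a : R[i]) f g, Cc f -> Cc g ->
         Lam (fun y => a * f y + g y) = (fun x => a * Lam f x + Lam g x)) &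
      (forall f, Cc f -> (forall y, 0 <= f y) -> forall x, 0 <= Lam f x)].

(* Main.v *)
Require Import Defs.
From HB Require Import structures.
From mathcomp Require Import all_boot all_order all_algebra.
From mathcomp Require Import all_classical all_reals all_analysis.
From mathcomp Require Import lra.
Import Order.TTheory GRing.Theory Num.Theory.
Local Open Scope ring_scope.
Local Open Scope classical_set_scope.
Set Implicit Arguments.
Unset Strict Implicit.
Unset Printing Implicit Defensive.

Lemma opc_compact_pullback (T : topologicalType)
  (S : set (one_point_compactification T)) :
  compact S -> ~ S None -> compact (Some @^-1` S).
Proof.
move=> cS nSN F PF FS.
have PG : ProperFilter (Some @ F) by exact: fmap_proper_filter.
have [p [Sp clp]] := cS _ PG FS.
case: p Sp clp => [q|] Sq clq; last by [].
exists q; split => //= A B FA nB.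
have GA : (Some @ F) (Some @` A).
  exact: (filterS (@preimage_image _ _ Some A) FA).
have nB' := @one_point_compactification_some_nbhs _ q B nB.
have [z [[a Aa <-] [b Bb]]] := clq _ _ GA nB'.
by move=> [ba]; exists a; split => //; rewrite -ba.
Qed.

Lemma cc_urysohn (R : realType) (T : topologicalType)
  (hT : hausdorff_space T) (lcT : locally_compact [set: T]) (C A : set T) :
  compact C -> closed A -> C `&` A = set0 ->
  exists g : T -> R, [/\ continuous g, compact (closure [set t | g t != 0]),
    (forall t, 0 <= g t <= 1), (forall t, C t -> g t = 1) &
    (forall t, A t -> g t = 0)].
Proof.
move=> cC clA CA0.
pose opc := one_point_compactification T.
have hO : hausdorff_space opc := one_point_compactification_hausdorff lcT hT.
have nO : normal_space opc :=
  compact_normal hO (@one_point_compactification_compact T).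
pose A' : set opc := ~` (Some @` ~` A).
pose C' : set opc := Some @` C.
have clA' : closed A'.
  exact/open_closedC/one_point_compactification_open_some/closed_openC.
have clC' : closed C'.
  apply: (compact_closed hO); apply: continuous_compact => //.
  apply: continuous_subspaceT; exact: one_point_compactification_some_continuous.
have A'C' : A' `&` C' = set0.
  apply/seteqP; split => // p [nAp [c Cc cp]]; apply: nAp.
  exists c => //= Ac; have : (C `&` A) c by [].
  by rewrite CA0.
have [F [cF F01 FA FC]] := (@uniform_separatorP _ R A' C').1
  ((@normal_separatorP R opc).1 nO A' C' clA' clC' A'C').
have FN : F None = 0 by apply: FA; exists None => //= -[].
have F01' p : 0 <= F p <= 1.
  by have := F01 (F p) (ex_intro2 _ _ p I erefl); rewrite /= in_itv.
pose g t := Num.max 0 (2 * F (Some t) - 1).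
exists g; split.
- move=> t; apply: (@continuous_max R T (fun=> 0) (fun t => 2 * F (Some t) - 1)).
    exact: cvg_cst.
  apply: cvgB; last exact: cvg_cst.
  apply: cvgM; first exact: cvg_cst.
  apply: (continuous_comp (one_point_compactification_some_continuous t)).
  exact: cF.
- pose S' : set opc := F @^-1` [set r | 2^-1 <= r].
  have clS' : closed S'.
    by apply: closed_comp; [move=> p _; exact: cF | exact: closed_ge].
  have cS : compact (Some @^-1` S').
    apply: opc_compact_pullback; last by rewrite /S' /= FN; lra.
    exact: (subclosed_compact clS' (@one_point_compactification_compact T)).
  apply: (subclosed_compact _ cS); first exact: closed_closure.
  have clS : closed (Some @^-1` S').
    apply: closed_comp; last first. have := @closed_ge R (2^-1). exact. move=> t _.
    apply: (continuous_comp (one_point_compactification_some_continuous t)).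
    exact: cF.
  have sub : [set t | g t != 0] `<=` Some @^-1` S'.
    move=> t /=; rewrite /g /S' /= maxEle; case: ifP => h; rewrite ?eqxx //.
    by move=> _; move: h; lra.
  by move/closure_id: clS => ->; exact: closureS.
- move=> t; have := F01' (Some t); rewrite /g maxEle; case: ifP => h; lra.
- move=> t Ct; rewrite /g; have -> : F (Some t) = 1 by apply: FC; exists (Some t) => //; exists t.
  by rewrite maxEle; case: ifP => h; lra.
- move=> t At; rewrite /g; have -> : F (Some t) = 0.
    by apply: FA; exists (Some t) => //; move=> [t' nA [e]]; apply: nA; rewrite e.
  by rewrite maxEle; case: ifP => h; lra.
Qed.

Lemma realC_continuous (R : realType) : continuous (fun r : R => ((r%:C)%C : R[i])).
Proof.
move=> r; apply/(@cvgrPdist_lt R[i] R[i]^o) => e e0.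
have : (complex.Im e == complex.Im 0) && (complex.Re 0 < complex.Re e) by rewrite -ltcE.
move=> /andP[/eqP Ie Re0].
have : \forall t \near nbhs r, `|r - t| < complex.Re e.
  exact: (@cvgr_dist_lt R R^o R (nbhs r) _ id r cvg_id _ Re0).
apply: filterS => s hs.
rewrite -rmorphB normc_def /= expr0n /= addr0 sqrtr_sqr.
by rewrite ltcE /= Ie eqxx.
Qed.

Lemma conjC_continuous (R : realType) : continuous (fun z : R[i] => z^*).
Proof.
move=> z; apply/(@cvgrPdist_lt R[i] R[i]^o R[i] (nbhs z) _ (fun z => z^*)) => e e0.
have : \forall t \near nbhs z, `|z - t| < e.
  by exists e => // t.
by apply: filterS => w hw; rewrite -rmorphB norm_conjC.
Qed.

Lemma ReC_continuous (R : realType) : continuous (fun z : R[i] => 'Re z).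
Proof.
have -> : (fun z : R[i] => 'Re z) = (fun z => (z + z^*) * 2%:R^-1).
  by apply: funext => w; rewrite ReE.
move=> z.
exact: (cvgM (cvgD cvg_id (@conjC_continuous R z)) (cvg_cst _)).
Qed.

Lemma ImC_continuous (R : realType) : continuous (fun z : R[i] => 'Im z).
Proof.
have -> : (fun z : R[i] => 'Im z) = (fun z => 'i * (z^* - z) * 2%:R^-1).
  by apply: funext => w; rewrite ImE.
move=> z.
exact: (cvgM (cvgM (cvg_cst _) (cvgB (@conjC_continuous R z) cvg_id)) (cvg_cst _)).
Qed.

Lemma Cc_sub2 (R : realType) (T : topologicalType) (f g h : T -> R[i]) :
  Cc f -> Cc g -> continuous h -> (forall y, f y = 0 -> g y = 0 -> h y = 0) ->
  Cc h.
Proof.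
move=> [_ cf] [_ cg] ch hz; split => //.
apply: (subclosed_compact _ (compactU cf cg)); first exact: closed_closure.
have clU : closed (closure [set t | f t != 0] `|` closure [set t | g t != 0]).
  by apply: closedU; exact: closed_closure.
move/closure_id : clU => ->; apply: closureS => t /= ht.
case: (eqVneq (f t) 0) => ft; last by left; apply: subset_closure.
case: (eqVneq (g t) 0) => gt; last by right; apply: subset_closure.
by move: ht; rewrite hz ?eqxx.
Qed.

Lemma Cc_sub (R : realType) (T : topologicalType) (f h : T -> R[i]) :
  Cc f -> continuous h -> (forall y, f y = 0 -> h y = 0) -> Cc h.
Proof. by move=> cf ch hz; apply: (Cc_sub2 cf cf ch) => y /hz. Qed.

Lemma Cc0 (R : realType) (T : topologicalType) : Cc (fun _ : T => 0 : R[i]).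
Proof.
split; first by move=> t; exact: cvg_cst.
have -> : [set t : T | (0 : R[i]) != 0] = set0 by apply/seteqP; split => t //=; rewrite eqxx.
by rewrite closure0; exact: compact0.
Qed.

Lemma lam0 (R : realType) (Y X : topologicalType) (Lam : (Y -> R[i]) -> (X -> R[i]))
  (Lpos : positive_linear_Cc Lam) : Lam (fun _ => 0) = (fun _ => 0).
Proof.
case: Lpos => _ lin _.
have := lin 1 _ _ (Cc0 R Y) (Cc0 R Y).
have -> : (fun _ : Y => (1 : R[i]) * 0 + 0) = (fun _ => 0).
  by apply: funext => y; rewrite mulr0 addr0.
move=> e; apply: funext => x; have := congr1 (fun F => F x) e => /=.
by rewrite mul1r -{1}[Lam _ x]add0r => /addIr <-.
Qed.

Lemma lamZ (R : realType) (Y X : topologicalType) (Lam : (Y -> R[i]) -> (X -> R[i]))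
  (Lpos : positive_linear_Cc Lam) (a : R[i]) (f : Y -> R[i]) :
  Cc f -> Lam (fun y => a * f y) = (fun x => a * Lam f x).
Proof.
move=> cf; have := Lpos => -[_ lin _].
have := lin a _ _ cf (Cc0 R Y); rewrite (lam0 Lpos).
have -> : (fun y : Y => a * f y + 0) = (fun y => a * f y).
  by apply: funext => y; rewrite addr0.
move=> ->; apply: funext => x; by rewrite addr0.
Qed.

Lemma lamB (R : realType) (Y X : topologicalType) (Lam : (Y -> R[i]) -> (X -> R[i]))
  (Lpos : positive_linear_Cc Lam) (f g : Y -> R[i]) :
  Cc f -> Cc g -> Lam (fun y => f y - g y) = (fun x => Lam f x - Lam g x).
Proof.
move=> cf cg; have := Lpos => -[_ lin _].
have := lin (-1) _ _ cg cf.
have -> : (fun y : Y => -1 * g y + f y) = (fun y => f y - g y).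
  by apply: funext => y; rewrite mulN1r addrC.
move=> ->; apply: funext => x; by rewrite mulN1r addrC.
Qed.

Lemma lamD (R : realType) (Y X : topologicalType) (Lam : (Y -> R[i]) -> (X -> R[i]))
  (Lpos : positive_linear_Cc Lam) (f g : Y -> R[i]) :
  Cc f -> Cc g -> Lam (fun y => f y + g y) = (fun x => Lam f x + Lam g x).
Proof.
move=> cf cg; have := Lpos => -[_ lin _].
have := lin 1 _ _ cf cg.
have -> : (fun y : Y => 1 * f y + g y) = (fun y => f y + g y).
  by apply: funext => y; rewrite mul1r.
move=> ->; apply: funext => x; by rewrite mul1r.
Qed.

Lemma contB (R : realType) (T : topologicalType) (f g : T -> R[i]) :
  continuous f -> continuous g -> continuous (fun y => f y - g y).
Proof. move=> cf cg y; exact: (@cvgB R[i] R[i]^o T (nbhs y) _ f g (f y) (g y) (cf y) (cg y)). Qed.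
Lemma contD (R : realType) (T : topologicalType) (f g : T -> R[i]) :
  continuous f -> continuous g -> continuous (fun y => f y + g y).
Proof. move=> cf cg y; exact: (@cvgD R[i] R[i]^o T (nbhs y) _ f g (f y) (g y) (cf y) (cg y)). Qed.
Lemma contM (R : realType) (T : topologicalType) (f g : T -> R[i]) :
  continuous f -> continuous g -> continuous (fun y => f y * g y).
Proof. move=> cf cg y; apply: cvgM; [exact: cf | exact: cg]. Qed.
Lemma contcM (R : realType) (T : topologicalType) (a : R[i]) (g : T -> R[i]) :
  continuous g -> continuous (fun y => a * g y).
Proof. move=> cg y; have := cvgM (cvg_cst a) (cg y); exact. Qed.

Lemma lam_real_bound (R : realType) (Y X : topologicalType)
  (Lam : (Y -> R[i]) -> (X -> R[i])) (Lpos : positive_linear_Cc Lam)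
  (u p : Y -> R[i]) : Cc u -> Cc p -> (forall y, u y \is Num.real) ->
  (forall y, `|u y| <= p y) -> forall x, `|Lam u x| <= Lam p x.
Proof.
move=> cu cp ur up x; have := Lpos => -[_ _ pos].
have [ccu _] := cu; have [ccp _] := cp.
have c1 : Cc (fun y => p y - u y).
  apply: (Cc_sub2 cp cu) => [|y -> ->]; last by rewrite subrr.
  exact: (contB ccp ccu).
have c2 : Cc (fun y => p y + u y).
  apply: (Cc_sub2 cp cu) => [|y -> ->]; last by rewrite addr0.
  exact: (contD ccp ccu).
have p1 : 0 <= Lam (fun y => p y - u y) x.
  apply: pos => // y; have := up y; rewrite real_ler_norml // => /andP[_ h].
  by rewrite subr_ge0.
have p2 : 0 <= Lam (fun y => p y + u y) x.
  apply: pos => // y; have := up y; rewrite real_ler_norml // => /andP[h _].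
  by rewrite addrC -[p y]opprK subr_ge0.
rewrite (lamB Lpos cp cu) /= in p1; rewrite (lamD Lpos cp cu) /= in p2.
have P0 : 0 <= Lam p x.
  by apply: pos => // y; exact: le_trans (normr_ge0 _) (up y).
have Qr : Lam u x \is Num.real.
  have -> : Lam u x = Lam p x - (Lam p x - Lam u x) by rewrite opprB addrCA subrr addr0.
  by apply: rpredB; exact: ger0_real.
rewrite real_ler_norml //; apply/andP; split.
  by rewrite -subr_ge0 opprK addrC.
by rewrite -subr_ge0.
Qed.

Lemma Re0C (R : realType) : 'Re (0 : R[i]) = 0.
Proof. by rewrite ReE conjC0 add0r mul0r. Qed.
Lemma Im0C (R : realType) : 'Im (0 : R[i]) = 0.
Proof. by rewrite ImE conjC0 subrr mulr0 mul0r. Qed.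

Lemma lam_bound (R : realType) (Y X : topologicalType)
  (Lam : (Y -> R[i]) -> (X -> R[i])) (Lpos : positive_linear_Cc Lam)
  (h p : Y -> R[i]) : Cc h -> Cc p ->
  (forall y, `|h y| <= p y) -> forall x, `|Lam h x| <= Lam p x *+ 2.
Proof.
move=> ch cp hp x; have [cch _] := ch.
pose u y := 'Re (h y); pose v y := 'Im (h y).
have cu : Cc u.
  apply: (Cc_sub ch) => [y|y hy]; last by rewrite /u hy Re0C.
  exact: (continuous_comp (cch y) (@ReC_continuous R _)).
have cv : Cc v.
  apply: (Cc_sub ch) => [y|y hy]; last by rewrite /v hy Im0C.
  exact: (continuous_comp (cch y) (@ImC_continuous R _)).
have [ccv _] := cv.
have civ : Cc (fun y => 'i * v y).
  apply: (Cc_sub cv) => [|y ->]; last by rewrite mulr0.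
  move=> y; have := @contcM R Y 'i v ccv y. exact.
have -> : h = (fun y => u y + 'i * v y).
  by apply: funext => y; rewrite /u /v -Crect.
rewrite (lamD Lpos cu civ) (lamZ Lpos _ cv) /=.
apply: le_trans (ler_normD _ _) _.
rewrite normrM normCi mul1r mulr2n; apply: lerD.
  apply: (lam_real_bound Lpos cu cp) => y; first exact: Creal_Re.
  by apply: le_trans (hp y); rewrite /u; case: (leif_normC_Re_Creal (h y)).
apply: (lam_real_bound Lpos cv cp) => y; first exact: Creal_Im.
apply: le_trans (hp y); rewrite /v -[X in `|X|]opprK -ReMil normrN.
case: (leif_normC_Re_Creal ('i * h y)) => + _; rewrite normrM normCi mul1r.
done.
Qed.

Lemma normC_realC (R : realType) (a : R) : `|((a%:C)%C : R[i])| = ((`|a|)%:C)%C.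
Proof. by rewrite normc_def /= expr0n /= addr0 sqrtr_sqr. Qed.

Lemma Cc_realC (R : realType) (T : topologicalType) (g : T -> R) :
  continuous g -> compact (closure [set t | g t != 0]) ->
  Cc (fun t => ((g t)%:C)%C : R[i]).
Proof.
move=> cg cK; split.
  by move=> t; exact: (continuous_comp (cg t) (@realC_continuous R _)).
have -> : [set t | ((g t)%:C)%C != 0 :> R[i]] = [set t | g t != 0].
  by apply/seteqP; split => t /=; rewrite fmorph_eq0.
exact: cK.
Qed.


Theorem lemma2p1 (R : realType) (Y X : topologicalType)
  (hY : hausdorff_space Y) (lcY : locally_compact [set: Y])
  (hX : hausdorff_space X) (lcX : locally_compact [set: X])
  (r : Y -> X) (rcont : continuous r)
  (Lam : (Y -> R[i]) -> (X -> R[i])) (Lpos : positive_linear_Cc Lam) :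
  (forall (f : Y -> R[i]) (x : X), Cc f ->
     (forall y, r y = x -> f y = 0) -> Lam f x = 0)
  <->
  (forall (f : Y -> R[i]) (g : X -> R[i]), Cc f -> Cc g ->
     Lam (fun y => f y * g (r y)) = (fun x => Lam f x * g x)).
Proof.
have [Lcc lin pos] := Lpos.
split.
- move=> H1 f g cf cg; apply: funext => x.
  have [ccf _] := cf; have [ccg _] := cg.
  have cgr : continuous (fun y => g (r y)).
    by move=> y; exact: (continuous_comp (rcont y) (ccg (r y))).
  have cfg : Cc (fun y => f y * g (r y)).
    apply: (Cc_sub cf) => [|y ->]; [exact: contM | by rewrite mul0r].
  have ch : Cc (fun y => - g x * f y + f y * g (r y)).
    have [ccfg _] := cfg.
    apply: (Cc_sub cf); last by move=> y hy; rewrite hy mulr0 mul0r addr0.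
    have := contD (@contcM R Y (- g x) f ccf) ccfg. exact.
  have e := lin (- g x) _ _ cf cfg; cbv beta in e.
  have h := H1 _ x ch; rewrite e in h.
  have {h} : Lam (fun y => f y * g (r y)) x + - g x * Lam f x == 0.
    by rewrite addrC h // => y ry; rewrite ry mulrC mulrN addNr.
  by rewrite addr_eq0 => /eqP ->; rewrite mulNr opprK mulrC.
move=> H2 f x cf fib.
have [ccf cKf] := cf.
have [phi [cphi cphiK phi01 phi1 _]] :=
  cc_urysohn R hY lcY cKf (@closed0 Y) (setI0 _).
pose Phi y : R[i] := ((phi y)%:C)%C.
have cPhi : Cc Phi by exact: Cc_realC.
have Phi0 y : 0 <= Phi y by rewrite /Phi ler0c; case/andP: (phi01 y).
have key e : 0 < e -> `|Lam f x| <= Lam Phi x * ((e%:C)%C) *+ 2.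
  move=> e0.
  have eC0 : (0 : R[i]) < (e%:C)%C by rewrite ltcE /= eqxx e0.
  pose B : set R[i] := ~` ball (0 : R[i]) ((e%:C)%C).
  pose K := f @^-1` B.
  have clK : closed K.
    apply: closed_comp; first by move=> y _; exact: ccf.
    exact/open_closedC/(@ball_open R[i] R[i]^o).
  have KfE y : K y -> f y != 0.
    move=> Ky; apply/eqP => fy0; apply: Ky.
    by rewrite /ball /= fy0 subrr normr0.
  have cK : compact K.
    apply: (subclosed_compact clK cKf) => y Ky.
    by apply: subset_closure; exact: KfE.
  have cimg : compact (r @` K).
    exact: (continuous_compact (continuous_subspaceT rcont) cK).
  have clx : closed [set x] := @accessible_closed_set1 X (hausdorff_accessible hX) x.
  have dis : r @` K `&` [set x] = set0.
    apply/seteqP; split => // z [[y Ky <-] ryx].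
    by move: (KfE y Ky); rewrite (fib y ryx) eqxx.
  have [gam [cgam cgamK gam01 gam1 gam0]] := cc_urysohn R hX lcX cimg clx dis.
  pose G t : R[i] := ((gam t)%:C)%C.
  have cG : Cc G by exact: Cc_realC.
  have Gx : G x = 0 by rewrite /G gam0 // rmorph0.
  have [ccG _] := cG.
  have cgr : continuous (fun y => G (r y)).
    by move=> y; exact: (continuous_comp (rcont y) (ccG (r y))).
  have cfg : Cc (fun y => f y * G (r y)).
    apply: (Cc_sub cf) => [|y ->]; [exact: contM | by rewrite mul0r].
  have [ccfg _] := cfg.
  have HG := congr1 (fun F => F x) (H2 f G cf cG); cbv beta in HG.
  rewrite Gx mulr0 in HG.
  pose h y := f y - f y * G (r y).
  have ch : Cc h.
    apply: (Cc_sub cf); last by move=> y hy; rewrite /h hy mul0r subr0.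
    have := contB ccf ccfg; exact.
  have Lh : Lam h x = Lam f x.
    have e1 := lamB Lpos cf cfg; cbv beta in e1.
    by rewrite /h e1 HG subr0.
  pose psi y := (e%:C)%C * Phi y.
  have [ccPhi _] := cPhi.
  have cpsi : Cc psi.
    apply: (Cc_sub cPhi); last by move=> y hy; rewrite /psi hy mulr0.
    have := @contcM R Y ((e%:C)%C) Phi ccPhi; exact.
  have hb y : `|h y| <= psi y.
    rewrite /h /psi.
    case: (eqVneq (f y) 0) => [fy0|fy0].
      rewrite fy0 mul0r subrr normr0; apply: mulr_ge0 => //; exact: ltW.
    have -> : Phi y = 1 by rewrite /Phi phi1 ?rmorph1 //; exact: subset_closure.
    rewrite mulr1 -{1}[f y]mulr1 -mulrBr normrM.
    case: (pselect (K y)) => Ky.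
      have -> : G (r y) = 1 by rewrite /G gam1 ?rmorph1 //; exists y.
      by rewrite subrr normr0 mulr0 ltW.
    have fye : `|f y| < (e%:C)%C.
      have : ball (0 : R[i]) ((e%:C)%C) (f y) by apply: contrapT.
      by rewrite /ball /= sub0r normrN.
    have g1 : `|1 - G (r y)| <= 1.
      have -> : 1 - G (r y) = ((1 - gam (r y))%:C)%C by rewrite /G rmorphB rmorph1.
      have -> : (1 : R[i]) = ((1 : R)%:C)%C by rewrite rmorph1.
      rewrite normC_realC lecR.
      case/andP: (gam01 (r y)) => a b; rewrite ger0_norm ?subr_ge0 //; lra.
    apply: le_trans (ltW fye); exact: ler_piMr.
  have := lam_bound Lpos ch cpsi hb x.
  have e2 := lamZ Lpos ((e%:C)%C) cPhi; cbv beta in e2.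
  by rewrite Lh /psi e2 mulrC.
have M0 : 0 <= Lam Phi x := pos _ cPhi Phi0 x.
have /complex_realP[m Mm] := ger0_real M0.
have /complex_realP[n Nn] := ger0_real (normr_ge0 (Lam f x)).
have m0 : 0 <= m by rewrite -ler0c -Mm.
have n0 : 0 <= n by rewrite -ler0c -Nn.
have key' e : 0 < e -> n <= m * e *+ 2.
  by move=> e0; have := key e e0; rewrite Mm Nn -rmorphM -rmorphMn lecR.
have n00 : n = 0.
  apply/eqP; rewrite eq_le n0 andbT; apply/negP => /negP; rewrite -ltNge => npos.
  pose t := n / (4 * (m + 1)).
  have d0 : 0 < 4 * (m + 1) by lra.
  have t0 : 0 < t by rewrite /t divr_gt0.
  have tt : t * (4 * (m + 1)) = n by rewrite /t divfK // gt_eqF.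
  have := key' t t0; rewrite mulr2n; nra.
by apply/eqP; rewrite -normr_eq0 Nn n00 rmorph0.
Qed.
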